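(* None of the following formulae (with $p,q$ distinct atoms) is a theorem of $\mathsf{IELE}$: $(p\multimap q)\to\Box(p\to q)$ (the axiom $\mathsf{Box}$); $(p\to\Box q)\to(p\multimap q)$ (the axiom $\mathsf{Hug}$); $\neg\neg(p\to q)\to(p\multimap q)$ (the converse of $\mathsf{IR}$).
   Context: $\mathcal{L}_{\multimap}$ is the propositional language built from atoms, $\top,\bot,\wedge,\vee,\to$ and a binary connective $\multimap$; $\neg\varphi:=\varphi\to\bot$, $\Box\varphi:=\top\multimap\varphi$. $\mathsf{iA}$ is the least set of formulae containing all substitution instances of intuitionistic propositional tautologies and all instances of $((\varphi\multimap\psi)\wedge(\varphi\multimap\chi))\to(\varphi\multimap(\psi\wedge\chi))$, $((\varphi\multimap\chi)\wedge(\psi\multimap\chi))\to((\varphi\vee\psi)\multimap\chi)$, $((\varphi\multimap\psi)\wedge(\psi\multimap\chi))\to(\varphi\multimap\chi)$, closed under modus ponens and the rule: from $\varphi\to\psi$ infer $\varphi\multimap\psi$. $\Lambda\oplus\Gamma$ denotes the least extension of $\Lambda\cup\Gamma$ closed under modus ponens, that rule and uniform substitution. $\mathsf{IELE}:=\mathsf{iA}\oplus\{(\varphi\to\psi)\to(\varphi\multimap\psi)\}\oplus\{(\varphi\multimap\psi)\to\neg\neg(\varphi\to\psi)\}$ (all instances). *)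

(* Defs.v *)
Set Implicit Arguments.

Inductive form : Type :=
| Var : nat -> form
| Top : form
| Bot : form
| And : form -> form -> form
| Or : form -> form -> form
| Imp : form -> form -> form
| Strict : form -> form -> form.

Definition Neg (a : form) : form := Imp a Bot.
Definition Box (a : form) : form := Strict Top a.

Fixpoint subst (s : nat -> form) (a : form) : form :=
  match a with
  | Var n => s n
  | Top => Top
  | Bot => Bot
  | And a b => And (subst s a) (subst s b)
  | Or a b => Or (subst s a) (subst s b)
  | Imp a b => Imp (subst s a) (subst s b)
  | Strict a b => Strict (subst s a) (subst s b)
  end.

(* Closed under modus ponens (in the inductive below),
   these generate exactly the substitution instances of intuitionistic
   propositional tautologies. *)
Inductive ipc_axiom : form -> Prop :=
| ipc_K a b : ipc_axiom (Imp a (Imp b a))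
| ipc_S a b c :
    ipc_axiom (Imp (Imp a (Imp b c)) (Imp (Imp a b) (Imp a c)))
| ipc_and1 a b : ipc_axiom (Imp (And a b) a)
| ipc_and2 a b : ipc_axiom (Imp (And a b) b)
| ipc_andI a b : ipc_axiom (Imp a (Imp b (And a b)))
| ipc_or1 a b : ipc_axiom (Imp a (Or a b))
| ipc_or2 a b : ipc_axiom (Imp b (Or a b))
| ipc_orE a b c :
    ipc_axiom (Imp (Imp a c) (Imp (Imp b c) (Imp (Or a b) c)))
| ipc_bot a : ipc_axiom (Imp Bot a)
| ipc_top : ipc_axiom Top.

(* IELE := iA (+) {(phi -> psi) -> (phi -o psi)} (+) {(phi -o psi) -> ~~(phi -> psi)}:
   the least set containing the iA axioms and the two extra schemes,
   closed under modus ponens, the rule (phi -> psi)/(phi -o psi), and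
   uniform substitution. *)
Inductive IELE : form -> Prop :=
| IELE_ipc a : ipc_axiom a -> IELE a
| IELE_conj a b c :
    IELE (Imp (And (Strict a b) (Strict a c)) (Strict a (And b c)))
| IELE_disj a b c :
    IELE (Imp (And (Strict a c) (Strict b c)) (Strict (Or a b) c))
| IELE_trans a b c :
    IELE (Imp (And (Strict a b) (Strict b c)) (Strict a c))
| IELE_CS a b : IELE (Imp (Imp a b) (Strict a b))
| IELE_IR a b : IELE (Imp (Strict a b) (Neg (Neg (Imp a b))))
| IELE_mp a b : IELE (Imp a b) -> IELE a -> IELE b
| IELE_nec a b : IELE (Imp a b) -> IELE (Strict a b)
| IELE_subst s a : IELE a -> IELE (subst s a).

(* Main.v *)
Require Import Defs.
From Stdlib Require Import Setoid Lia PeanoNat.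

Section Sem.
Variable W : Type.
Variable le : W -> W -> Prop.
Variable R : W -> W -> Prop.
Hypothesis le_refl : forall w, le w w.
Hypothesis le_trans : forall u v w, le u v -> le v w -> le u w.
Hypothesis R_pers : forall w w' v, le w w' -> R w' v -> R w v.
Hypothesis R_le : forall w v, R w v -> le w v.
Hypothesis R_max : forall w v, le w v -> exists u, le v u /\ forall x, le u x -> R w x.

Fixpoint force (V : nat -> W -> Prop) (w : W) (a : form) : Prop :=
  match a with
  | Var n => V n w
  | Top => True
  | Bot => False
  | And a b => force V w a /\ force V w b
  | Or a b => force V w a \/ force V w b
  | Imp a b => forall v, le w v -> force V v a -> force V v b
  | Strict a b => forall v, R w v -> force V v a -> force V v b
  end.

Definition pers (V : nat -> W -> Prop) := forall n w v, le w v -> V n w -> V n v.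

Lemma force_pers V : pers V -> forall a w v, le w v -> force V w a -> force V v a.
Proof.
  intros HV a; induction a; simpl; intros w v Hwv H; eauto.
  - destruct H; split; eauto.
  - destruct H; [left|right]; eauto.
Qed.

Lemma force_subst V s a w :
  force V w (subst s a) <-> force (fun n w => force V w (s n)) w a.
Proof.
  revert w; induction a; simpl; intros w; try tauto.
  - rewrite IHa1, IHa2; tauto.
  - rewrite IHa1, IHa2; tauto.
  - split; intros H v Hv; specialize (H v Hv); rewrite ?IHa1, ?IHa2 in *; tauto.
  - split; intros H v Hv; specialize (H v Hv); rewrite ?IHa1, ?IHa2 in *; tauto.
Qed.

Lemma sound a : IELE a -> forall V, pers V -> forall w, force V w a.
Proof.
  induction 1; intros V HV w; simpl.
  - destruct H; simpl.
    + intros v Hv Ha x Hx _. eapply force_pers; eauto.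
    + intros v Hv H1 x Hx H2 y Hy Ha.
      apply (H1 y); eauto.
    + intros v Hv [H1 H2]; auto.
    + intros v Hv [H1 H2]; auto.
    + intros v Hv Ha x Hx Hb; split; auto. eapply force_pers; eauto.
    + intros v Hv Ha; auto.
    + intros v Hv Ha; auto.
    + intros v Hv H1 x Hx H2 y Hy [Ha|Ha]; eauto.
    + intros v _ [].
    + exact I.
  - intros v _ [H1 H2] x Hx Ha; split; eauto.
  - intros v _ [H1 H2] x Hx [Ha|Ha]; eauto.
  - intros v _ [H1 H2] x Hx Ha; apply H2; eauto.
  - intros v _ H x Hx Ha. apply (H x); auto.
  - intros v _ H x Hx Hn. destruct (R_max _ _ Hx) as [u [Hu Hall]].
    apply (Hn u Hu). intros y Hy Ha. apply (H y); auto.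
  - specialize (IHIELE1 V HV w). simpl in IHIELE1. apply IHIELE1; auto.
  - intros v Hv Ha. specialize (IHIELE V HV v). simpl in IHIELE. apply IHIELE; auto.
  - apply force_subst. apply IHIELE.
    intros n x y Hxy Hn. eapply force_pers; eauto.
Qed.
End Sem.

Inductive W3 := A | B | C.
Definition rk (x : W3) : nat := match x with A => 0 | B => 1 | C => 2 end.
Definition le3 (x y : W3) : Prop := rk x <= rk y.

Definition R1 (x y : W3) : Prop :=
  match x, y with A, A => True | _, C => True | _, _ => False end.
Definition R2 (x y : W3) : Prop :=
  match x, y with A, B => True | _, C => True | _, _ => False end.

Ltac w3 := repeat match goal with x : W3 |- _ => destruct x end;
  unfold le3, R1, R2 in *; simpl in *; try tauto; try lia.
From Stdlib Require Import Lia.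

Ltac w3' := repeat match goal with x : W3 |- _ => destruct x end;
  unfold le3, R1, R2 in *; simpl in *; try tauto; try lia.

Lemma sound1 a : IELE a -> forall V, @pers W3 le3 V -> forall w, @force W3 le3 R1 V w a.
Proof.
  intro H; apply (@sound W3 le3 R1); intros; w3'.
  all: try (exists C; split; [simpl; lia | intros x Hx; destruct x; simpl in *; try tauto; lia]).
Qed.

Lemma sound2 a : IELE a -> forall V, @pers W3 le3 V -> forall w, @force W3 le3 R2 V w a.
Proof.
  intro H; apply (@sound W3 le3 R2); intros; w3'.
  all: try (exists C; split; [simpl; lia | intros x Hx; destruct x; simpl in *; try tauto; lia]).
Qed.

Definition Pbc (w : W3) : Prop := match w with A => False | _ => True end.
Definition Pc (w : W3) : Prop := match w with C => True | _ => False end.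
Definition Pall (w : W3) : Prop := True.

Lemma pers_mk (P Q : W3 -> Prop) p :
  (forall x y, le3 x y -> P x -> P y) -> (forall x y, le3 x y -> Q x -> Q y) ->
  @pers W3 le3 (fun n w => if Nat.eqb n p then P w else Q w).
Proof. intros HP HQ n x y Hxy; destruct (Nat.eqb n p); eauto. Qed.

Lemma pbc_p : forall x y, le3 x y -> Pbc x -> Pbc y. Proof. intros x y; w3'. Qed.
Lemma pc_p : forall x y, le3 x y -> Pc x -> Pc y. Proof. intros x y; w3'. Qed.
Lemma pall_p : forall x y, le3 x y -> Pall x -> Pall y. Proof. intros x y; w3'. Qed.

Theorem proposition3p10 (p q : nat) (hpq : p <> q) :
  ~ IELE (Imp (Strict (Var p) (Var q)) (Box (Imp (Var p) (Var q)))) /\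
  ~ IELE (Imp (Imp (Var p) (Box (Var q))) (Strict (Var p) (Var q))) /\
  ~ IELE (Imp (Neg (Neg (Imp (Var p) (Var q)))) (Strict (Var p) (Var q))).
Proof.
  assert (Hqp : Nat.eqb q p = false) by (apply Nat.eqb_neq; congruence).
  split; [|split]; intro H.
  - pose proof (@sound1 _ H _ (@pers_mk Pbc Pc p pbc_p pc_p) A A (le_n _)) as K.
    simpl in K; rewrite ?Nat.eqb_refl, ?Hqp in K.
    assert (Hpq' : forall v, R1 A v -> Pbc v -> Pc v) by (intros v; w3').
    apply (K Hpq' A I I B); [unfold le3; simpl; lia|exact I].
  - pose proof (@sound2 _ H _ (@pers_mk Pbc Pc p pbc_p pc_p) A A (le_n _)) as K.
    simpl in K; rewrite ?Nat.eqb_refl, ?Hqp in K.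
    assert (H1 : forall v, le3 A v -> Pbc v -> forall x, R2 v x -> True -> Pc x)
      by (intros v; w3'; intros x; w3').
    specialize (K H1 B I I). exact K.
  - pose proof (@sound2 _ H _ (@pers_mk Pall Pc p pall_p pc_p) A A (le_n _)) as K.
    simpl in K; rewrite ?Nat.eqb_refl, ?Hqp in K.
    refine (K _ B I I).
    intros v Hv Hn. apply (Hn C); [destruct v; unfold le3; simpl; lia|].
    intros x Hx _. destruct x; unfold le3 in Hx; simpl in *; try lia; exact I.
Qed.
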